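(* The logic $\mathsf{iCC}:=\mathsf{ICK}\oplus(p\mathrel{\Box\!\!\!\rightarrow} p)\oplus(((p\mathrel{\Box\!\!\!\rightarrow} q)\wedge((p\wedge q)\mathrel{\Box\!\!\!\rightarrow} r))\to(p\mathrel{\Box\!\!\!\rightarrow} r))\oplus(((p\mathrel{\Box\!\!\!\rightarrow} q)\wedge(p\mathrel{\Box\!\!\!\rightarrow} r))\to((p\wedge q)\mathrel{\Box\!\!\!\rightarrow} r))$ is sound and complete with respect to the class of cautious conditional frames.
   Context: Formulas: $\phi ::= p\mid\bot\mid\phi\wedge\phi\mid\phi\vee\phi\mid\phi\to\phi\mid\phi\mathrel{\Box\!\!\!\rightarrow}\phi$. $\mathsf{ICK}\oplus\Gamma$ is the smallest set containing intuitionistic propositional logic, $\Gamma$, $(p\mathrel{\Box\!\!\!\rightarrow}(q\wedge r))\leftrightarrow((p\mathrel{\Box\!\!\!\rightarrow} q)\wedge(p\mathrel{\Box\!\!\!\rightarrow} r))$ and $(p\mathrel{\Box\!\!\!\rightarrow}\top)\leftrightarrow\top$, closed under uniform substitution, modus ponens and congruence rules for both arguments of $\mathrel{\Box\!\!\!\rightarrow}$. A conditional frame is $(X,\leq,\mathcal{R})$, $(X,\leq)$ a nonempty preorder, $\mathcal{R}=\{R_a\mid a\text{ an upset}\}$ with $(\leq\circ R_a)\subseteq(R_a\circ\leq)$; valuations assign upsets to letters and $x\models\phi\mathrel{\Box\!\!\!\rightarrow}\psi$ iff every $y$ with $xR_{V(\phi)}y$ satisfies $\psi$. A cautious conditional frame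 is one satisfying, for all $x$ and upsets $a,b$: $R_a[x]\subseteq a$, and $R_a[x]\subseteq b\subseteq a$ implies ${\uparrow}R_a[x]={\uparrow}R_b[x]$. *)

(* Defs.v *)
From Stdlib Require Import List.

Inductive form : Type :=
| Var : nat -> form
| Bot : form
| And : form -> form -> form
| Or  : form -> form -> form
| Imp : form -> form -> form
| Cond : form -> form -> form.

Definition Top : form := Imp Bot Bot.
Definition Iff (a b : form) : form := And (Imp a b) (Imp b a).

Fixpoint subst (s : nat -> form) (f : form) : form :=
  match f with
  | Var n => s n
  | Bot => Bot
  | And a b => And (subst s a) (subst s b)
  | Or a b => Or (subst s a) (subst s b)
  | Imp a b => Imp (subst s a) (subst s b)
  | Cond a b => Cond (subst s a) (subst s b)
  end.

Definition p := Var 0.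
Definition q := Var 1.
Definition r := Var 2.

Inductive ipc_axiom : form -> Prop :=
| ax_K  : forall a b, ipc_axiom (Imp a (Imp b a))
| ax_S  : forall a b c, ipc_axiom (Imp (Imp a (Imp b c)) (Imp (Imp a b) (Imp a c)))
| ax_A1 : forall a b, ipc_axiom (Imp (And a b) a)
| ax_A2 : forall a b, ipc_axiom (Imp (And a b) b)
| ax_AI : forall a b, ipc_axiom (Imp a (Imp b (And a b)))
| ax_O1 : forall a b, ipc_axiom (Imp a (Or a b))
| ax_O2 : forall a b, ipc_axiom (Imp b (Or a b))
| ax_OE : forall a b c, ipc_axiom (Imp (Imp a c) (Imp (Imp b c) (Imp (Or a b) c)))
| ax_EFQ : forall a, ipc_axiom (Imp Bot a).

Inductive ick_axiom : form -> Prop :=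
| ick_C : ick_axiom (Iff (Cond p (And q r)) (And (Cond p q) (Cond p r)))
| ick_N : ick_axiom (Iff (Cond p Top) Top).

Inductive icc_extra : form -> Prop :=
| icc_id  : icc_extra (Cond p p)
| icc_cut : icc_extra (Imp (And (Cond p q) (Cond (And p q) r)) (Cond p r))
| icc_cm  : icc_extra (Imp (And (Cond p q) (Cond p r)) (Cond (And p q) r)).

Inductive ICK_plus (Gamma : form -> Prop) : form -> Prop :=
| d_ipc  : forall f, ipc_axiom f -> ICK_plus Gamma f
| d_gam  : forall f, Gamma f -> ICK_plus Gamma f
| d_ick  : forall f, ick_axiom f -> ICK_plus Gamma f
| d_subst : forall s f, ICK_plus Gamma f -> ICK_plus Gamma (subst s f)
| d_mp   : forall a b, ICK_plus Gamma (Imp a b) -> ICK_plus Gamma a -> ICK_plus Gamma b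
| d_congl : forall a b c, ICK_plus Gamma (Iff a b) ->
              ICK_plus Gamma (Iff (Cond a c) (Cond b c))
| d_congr : forall a b c, ICK_plus Gamma (Iff a b) ->
              ICK_plus Gamma (Iff (Cond c a) (Cond c b)).

Definition iCC : form -> Prop := ICK_plus icc_extra.

(* The family R = {R_a | a upset} is represented as a function
   from predicates to relations; it is only used on upsets, and it is required to
   depend only on the extension of the predicate. *)
Record cframe : Type := CFrame {
  W : Type;
  le : W -> W -> Prop;
  R : (W -> Prop) -> W -> W -> Prop;
  W_inhabited : inhabited W;
  le_refl : forall x, le x x;
  le_trans : forall x y z, le x y -> le y z -> le x z;
  R_ext : forall a b : W -> Prop, (forall x, a x <-> b x) ->
            forall x y, R a x y <-> R b x y;
  R_coh : forall a : W -> Prop, (forall x y, le x y -> a x -> a y) ->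
            forall x x' y', le x x' -> R a x' y' -> exists y, R a x y /\ le y y'
}.

Definition upset (F : cframe) (a : W F -> Prop) : Prop :=
  forall x y, le F x y -> a x -> a y.

Fixpoint forces (F : cframe) (V : nat -> W F -> Prop) (x : W F) (f : form) : Prop :=
  match f with
  | Var n => V n x
  | Bot => False
  | And a b => forces F V x a /\ forces F V x b
  | Or a b => forces F V x a \/ forces F V x b
  | Imp a b => forall y, le F x y -> forces F V y a -> forces F V y b
  | Cond a b => forall y, R F (fun z => forces F V z a) x y -> forces F V y b
  end.

Definition valuation (F : cframe) (V : nat -> W F -> Prop) : Prop :=
  forall n, upset F (V n).

Definition valid (F : cframe) (f : form) : Prop :=
  forall V, valuation F V -> forall x, forces F V x f.

Definition upclosure (F : cframe) (S : W F -> Prop) : W F -> Prop :=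
  fun y => exists s, S s /\ le F s y.

Definition cautious (F : cframe) : Prop :=
  (forall x (a : W F -> Prop), upset F a -> forall y, R F a x y -> a y) /\
  (forall x (a b : W F -> Prop), upset F a -> upset F b ->
     (forall y, R F a x y -> b y) -> (forall y, b y -> a y) ->
     forall y, upclosure F (R F a x) y <-> upclosure F (R F b x) y).

(* Main.v *)
Require Import Defs.
From Stdlib Require Import List Classical Arith Lia.
From Stdlib Require Cantor.

Lemma persist (F : cframe) V (hV : valuation F V) (f : form) :
  forall x y, le F x y -> forces F V x f -> forces F V y f.
Proof.
  induction f as [n| |a IHa b IHb|a IHa b IHb|a IHa b IHb|a IHa b IHb]; simpl; intros x y hxy H.
  - exact (hV n x y hxy H).
  - exact H.
  - destruct H; split; eauto.
  - destruct H; [left|right]; eauto.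
  - intros z hyz. apply H. eapply le_trans; eauto.
  - intros z HR.
    destruct (R_coh F (fun z => forces F V z a) IHa x y z hxy HR) as [w [Hw1 Hw2]].
    eapply IHb; [exact Hw2|]. apply H. exact Hw1.
Qed.

Lemma subst_forces (F : cframe) V s (f : form) :
  forall x, forces F V x (subst s f) <-> forces F (fun n y => forces F V y (s n)) x f.
Proof.
  induction f as [n| |a IHa b IHb|a IHa b IHb|a IHa b IHb|a IHa b IHb]; simpl; intros x.
  - tauto.
  - tauto.
  - rewrite IHa, IHb; tauto.
  - rewrite IHa, IHb; tauto.
  - split; intros H y hy Hy.
    + apply IHb. apply H; auto. apply IHa; auto.
    + apply IHb. apply H; auto. apply IHa; auto.
  - assert (E : forall z, forces F V z (subst s a) <-> forces F (fun n y => forces F V y (s n)) z a) by (intro; apply IHa).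
    split; intros H y HR; apply IHb; apply H.
    + apply (proj2 (R_ext F _ _ E x y)); exact HR.
    + apply (proj1 (R_ext F _ _ E x y)); exact HR.
Qed.

Lemma valid_iff (F : cframe) a b : valid F (Iff a b) ->
  forall V, valuation F V -> forall z, forces F V z a <-> forces F V z b.
Proof.
  intros H V hV z. destruct (H V hV z) as [H1 H2].
  split; intros; [apply H1|apply H2]; auto; apply le_refl.
Qed.

Lemma soundness (f : form) : iCC f -> forall F, cautious F -> valid F f.
Proof.
  intro Hd. induction Hd as [f Ha|f Hg|f Hk|s f Hf IH|a b H1 IH1 H2 IH2|a b c H IH|a b c H IH];
    intros F [Cau1 Cau2] V hV x.
  - destruct Ha; simpl.
    + intros y _ Ha z hz _. eapply persist; eauto.
    + intros y _ H1 z hz H2 w hw Ha.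
      assert (hzw : le F y w) by (eapply le_trans; eauto).
      apply (H1 w hzw Ha w (le_refl F w)). apply H2; auto.
    + intros y _ [H _]; auto.
    + intros y _ [_ H]; auto.
    + intros y _ Ha z hz Hb. split; auto. eapply persist; eauto.
    + intros y _ H; auto.
    + intros y _ H; auto.
    + intros y _ H1 z hz H2 w hw [Ha|Hb].
      * apply H1; auto. eapply le_trans; eauto.
      * apply H2; auto.
    + intros y _ [].
  - destruct Hg; simpl.
    + intros y Hy. apply (Cau1 x (fun z => V 0 z) (hV 0)). exact Hy.
    + intros y _ [H1 H2] z Hz.
      assert (Hb : forall w, R F (fun z => V 0 z) y w -> (fun z => V 0 z /\ V 1 z) w).
      { intros w Hw. split; [exact (Cau1 y _ (hV 0) w Hw)| exact (H1 w Hw)]. }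
      assert (Hup : upset F (fun z => V 0 z /\ V 1 z)).
      { intros u v huv [h1 h2]; split; eapply hV; eauto. }
      destruct (proj1 (Cau2 y _ _ (hV 0) Hup Hb (fun w hw => proj1 hw) z)
                 (ex_intro _ z (conj Hz (le_refl F z)))) as [s [Hs1 Hs2]].
      eapply hV; [exact Hs2|]. exact (H2 s Hs1).
    + intros y _ [H1 H2] z Hz.
      assert (Hb : forall w, R F (fun z => V 0 z) y w -> (fun z => V 0 z /\ V 1 z) w).
      { intros w Hw. split; [exact (Cau1 y _ (hV 0) w Hw)| exact (H1 w Hw)]. }
      assert (Hup : upset F (fun z => V 0 z /\ V 1 z)).
      { intros u v huv [h1 h2]; split; eapply hV; eauto. }
      destruct (proj2 (Cau2 y _ _ (hV 0) Hup Hb (fun w hw => proj1 hw) z)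
                 (ex_intro _ z (conj Hz (le_refl F z)))) as [s [Hs1 Hs2]].
      eapply hV; [exact Hs2|]. exact (H2 s Hs1).
  - destruct Hk; simpl; split.
    + intros y _ H. split; intros z Hz; apply (H z Hz).
    + intros y _ [H1 H2] z Hz. split; auto.
    + unfold Top; cbn; intros; contradiction.
    + unfold Top; cbn; intros; contradiction.
  - apply subst_forces. apply IH; [split; auto|].
    intros n u v huv Hu. exact (persist F V hV (s n) u v huv Hu).
  - apply (IH1 F (conj Cau1 Cau2) V hV x x (le_refl F x)). exact (IH2 F (conj Cau1 Cau2) V hV x).
  - pose proof (valid_iff F a b (IH F (conj Cau1 Cau2)) V hV) as E.
    simpl; split; intros y _ Hc z HR; apply Hc.
    + apply (proj2 (R_ext F _ _ E y z)); exact HR.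
    + apply (proj1 (R_ext F _ _ E y z)); exact HR.
  - pose proof (valid_iff F a b (IH F (conj Cau1 Cau2)) V hV) as E.
    simpl; split; intros y _ Hc z HR; apply E; apply Hc; auto.
Qed.

Inductive Der (T : form -> Prop) : form -> Prop :=
| Dhyp : forall a, T a -> Der T a
| Dthm : forall a, iCC a -> Der T a
| Dmp : forall a b, Der T (Imp a b) -> Der T a -> Der T b.

Definition ext (T : form -> Prop) (x : form) : form -> Prop := fun y => T y \/ y = x.

Lemma Der_mono (T T' : form -> Prop) a : (forall x, T x -> T' x) -> Der T a -> Der T' a.
Proof. intros H D; induction D; [apply Dhyp; auto|apply Dthm; auto|eapply Dmp; eauto]. Qed.

Lemma Dax T f : ipc_axiom f -> Der T f.
Proof. intro; apply Dthm; apply d_ipc; auto. Qed.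

Lemma iCC_imp_id a : iCC (Imp a a).
Proof.
  apply (d_mp _ (Imp a (Imp a a))).
  - apply (d_mp _ (Imp a (Imp (Imp a a) a))).
    + apply d_ipc, ax_S.
    + apply d_ipc, ax_K.
  - apply d_ipc, ax_K.
Qed.

Lemma ded T x f : Der (ext T x) f -> Der T (Imp x f).
Proof.
  intro D; induction D as [a [Ha|Ha]|a Ha|a b D1 IH1 D2 IH2].
  - eapply Dmp; [apply Dax, ax_K|apply Dhyp; auto].
  - subst; apply Dthm, iCC_imp_id.
  - eapply Dmp; [apply Dax, ax_K|apply Dthm; auto].
  - eapply Dmp; [eapply Dmp; [apply Dax, ax_S| exact IH1]| exact IH2].
Qed.

Lemma Der_empty f : Der (fun _ => False) f -> iCC f.
Proof. intro D; induction D; [contradiction|auto|eapply d_mp; eauto]. Qed.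

Lemma hyp T x : Der (ext T x) x.
Proof. apply Dhyp; right; reflexivity. Qed.

Lemma hypT T x a : T a -> Der (ext T x) a.
Proof. intro; apply Dhyp; left; auto. Qed.

Definition E0 : form -> Prop := fun _ => False.

Lemma thm_of T a : Der (ext E0 a) T -> iCC (Imp a T).
Proof. intro D; apply Der_empty, ded; auto. Qed.

Lemma iff_intro a b : iCC (Imp a b) -> iCC (Imp b a) -> iCC (Iff a b).
Proof. intros H1 H2. eapply d_mp; [eapply d_mp; [apply d_ipc, ax_AI|exact H1]|exact H2]. Qed.

Lemma iff_1 a b : iCC (Iff a b) -> iCC (Imp a b).
Proof. intro H; eapply d_mp; [apply d_ipc, ax_A1|exact H]. Qed.
Lemma iff_2 a b : iCC (Iff a b) -> iCC (Imp b a).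
Proof. intro H; eapply d_mp; [apply d_ipc, ax_A2|exact H]. Qed.

Lemma Dand1 T a b : Der T (And a b) -> Der T a.
Proof. intro; eapply Dmp; [apply Dax, ax_A1|eauto]. Qed.
Lemma Dand2 T a b : Der T (And a b) -> Der T b.
Proof. intro; eapply Dmp; [apply Dax, ax_A2|eauto]. Qed.
Lemma Dandi T a b : Der T a -> Der T b -> Der T (And a b).
Proof. intros; eapply Dmp; [eapply Dmp; [apply Dax, ax_AI|eauto]|eauto]. Qed.

Lemma iCC_mp_and a b : iCC (Imp (And (Imp a b) a) b).
Proof.
  apply thm_of. eapply Dmp; [eapply Dand1; apply hyp| eapply Dand2; apply hyp].
Qed.

Lemma iCC_dup x y : iCC (Imp x y) -> iCC (Iff x (And x y)).
Proof.
  intro H. apply iff_intro.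
  - apply thm_of. apply Dandi; [apply hyp|]. eapply Dmp; [apply Dthm, H|apply hyp].
  - apply d_ipc, ax_A1.
Qed.

Lemma iCC_top_imp b : iCC b -> iCC (Imp Top b).
Proof. intro H; eapply d_mp; [apply d_ipc, ax_K|exact H]. Qed.

Lemma iCC_and_iff a b : iCC (Imp b a) -> iCC (Iff (And a b) b).
Proof.
  intro H. apply iff_intro.
  - apply d_ipc, ax_A2.
  - apply thm_of. apply Dandi; [|apply hyp]. eapply Dmp; [apply Dthm, H|apply hyp].
Qed.

Definition sub3 (a b c : form) : nat -> form :=
  fun n => match n with 0 => a | 1 => b | _ => c end.

Lemma ax_C a b c : iCC (Iff (Cond a (And b c)) (And (Cond a b) (Cond a c))).
Proof. exact (d_subst _ (sub3 a b c) _ (d_ick _ _ ick_C)). Qed.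
Lemma ax_N a : iCC (Iff (Cond a Top) Top).
Proof. exact (d_subst _ (sub3 a a a) _ (d_ick _ _ ick_N)). Qed.
Lemma ax_id a : iCC (Cond a a).
Proof. exact (d_subst _ (sub3 a a a) _ (d_gam _ _ icc_id)). Qed.
Lemma ax_cut a b c : iCC (Imp (And (Cond a b) (Cond (And a b) c)) (Cond a c)).
Proof. exact (d_subst _ (sub3 a b c) _ (d_gam _ _ icc_cut)). Qed.
Lemma ax_cm a b c : iCC (Imp (And (Cond a b) (Cond a c)) (Cond (And a b) c)).
Proof. exact (d_subst _ (sub3 a b c) _ (d_gam _ _ icc_cm)). Qed.

Fixpoint code (f : form) : nat :=
  match f with
  | Var n => Cantor.to_nat (0, n)
  | Bot => Cantor.to_nat (1, 0)
  | And a b => Cantor.to_nat (2, Cantor.to_nat (code a, code b))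
  | Or a b => Cantor.to_nat (3, Cantor.to_nat (code a, code b))
  | Imp a b => Cantor.to_nat (4, Cantor.to_nat (code a, code b))
  | Cond a b => Cantor.to_nat (5, Cantor.to_nat (code a, code b))
  end.

Lemma to_nat_inj x y : Cantor.to_nat x = Cantor.to_nat y -> x = y.
Proof.
  intro H. rewrite <- (Cantor.cancel_of_to x), <- (Cantor.cancel_of_to y), H. reflexivity.
Qed.

Lemma to_nat_inj2 k x y k' x' y' :
  Cantor.to_nat (k, Cantor.to_nat (x, y)) = Cantor.to_nat (k', Cantor.to_nat (x', y')) ->
  k = k' /\ x = x' /\ y = y'.
Proof.
  intro H. apply to_nat_inj in H.
  assert (H1 : k = k') by congruence.
  assert (H2 : Cantor.to_nat (x, y) = Cantor.to_nat (x', y')) by congruence.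
  apply to_nat_inj in H2. split; [auto|]. split; congruence.
Qed.

Lemma code_inj f : forall g, code f = code g -> f = g.
Proof.
  induction f as [n| |a IHa b IHb|a IHa b IHb|a IHa b IHb|a IHa b IHb];
    intros g; destruct g as [m| |c d|c d|c d|c d]; cbn [code]; intro H;
    first [ apply to_nat_inj2 in H; destruct H as [Hk [H1 H2]];
            first [discriminate Hk | f_equal; auto]
          | apply to_nat_inj in H; first [discriminate H | reflexivity | congruence ]
          | exfalso; apply to_nat_inj in H; discriminate H ].
Qed.

Fixpoint Dn (T : form -> Prop) (phi : form) (n : nat) : form -> Prop :=
  match n with
  | 0 => T
  | S n => fun x => Dn T phi n x \/ (code x = n /\ ~ Der (ext (Dn T phi n) x) phi)
  end.

Definition Dinf T phi : form -> Prop := fun x => exists n, Dn T phi n x.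

Lemma Dn_mono T phi n m : n <= m -> forall x, Dn T phi n x -> Dn T phi m x.
Proof. induction 1; simpl; auto. Qed.

Lemma Dn_cons T phi : ~ Der T phi -> forall n, ~ Der (Dn T phi n) phi.
Proof.
  intros H0 n; induction n as [|n IHn]; simpl; auto.
  intro HD.
  destruct (classic (exists x, code x = n /\ ~ Der (ext (Dn T phi n) x) phi)) as [[x [hc hx]]|hno].
  - apply hx. eapply Der_mono; [|exact HD]. intros y [hy|[hy1 hy2]].
    + left; auto.
    + right. apply code_inj. congruence.
  - apply IHn. eapply Der_mono; [|exact HD]. intros y [hy|[hy1 hy2]]; auto.
    exfalso; apply hno; eauto.
Qed.

Lemma Dinf_compact T phi a : Der (Dinf T phi) a -> exists n, Der (Dn T phi n) a.
Proof.
  intro D; induction D as [a [n Hn]|a Ha|a b D1 [n1 IH1] D2 [n2 IH2]].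
  - exists n; apply Dhyp; auto.
  - exists 0; apply Dthm; auto.
  - exists (max n1 n2). eapply Dmp.
    + eapply Der_mono; [|exact IH1]. apply Dn_mono; lia.
    + eapply Der_mono; [|exact IH2]. apply Dn_mono; lia.
Qed.

Lemma Dinf_cons T phi : ~ Der T phi -> ~ Der (Dinf T phi) phi.
Proof. intros H D. destruct (Dinf_compact _ _ _ D) as [n Hn]. exact (Dn_cons T phi H n Hn). Qed.

Lemma Dinf_ext T phi x : ~ Dinf T phi x -> Der (Dinf T phi) (Imp x phi).
Proof.
  intro Hx. apply ded. apply NNPP; intro HD. apply Hx. exists (S (code x)); simpl.
  right; split; auto. intro D; apply HD. eapply Der_mono; [|exact D].
  intros y [hy|hy]; [left; exists (code x); auto|right; auto].
Qed.

Record world : Type := mkW {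
  th : form -> Prop;
  th_closed : forall a, Der th a -> th a;
  th_cons : ~ th Bot;
  th_prime : forall a b, th (Or a b) -> th a \/ th b
}.

Lemma prime_ext T phi : ~ Der T phi -> exists w : world, (forall x, T x -> th w x) /\ ~ th w phi.
Proof.
  intro H0.
  assert (Hc : ~ Der (Dinf T phi) phi) by (apply Dinf_cons; auto).
  assert (Hcl : forall a, Der (Dinf T phi) a -> Dinf T phi a).
  { intros a Da. apply NNPP; intro Hn. apply Hc. eapply Dmp; [apply Dinf_ext; exact Hn|exact Da]. }
  assert (Hbot : ~ Dinf T phi Bot).
  { intro Hb. apply Hc. eapply Dmp; [apply Dax, ax_EFQ|apply Dhyp; exact Hb]. }
  assert (Hpr : forall a b, Dinf T phi (Or a b) -> Dinf T phi a \/ Dinf T phi b).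
  { intros a b Hab. apply NNPP; intro Hn. apply Hc.
    assert (Ha : ~ Dinf T phi a) by tauto. assert (Hb : ~ Dinf T phi b) by tauto.
    eapply Dmp; [eapply Dmp; [eapply Dmp; [apply Dax, ax_OE|apply Dinf_ext; exact Ha]
                             |apply Dinf_ext; exact Hb]|apply Dhyp; exact Hab]. }
  exists (mkW (Dinf T phi) Hcl Hbot Hpr). simpl. split.
  - intros x Hx; exists 0; exact Hx.
  - intro Hp. apply Hc. apply Dhyp; auto.
Qed.

Lemma th_thm (w : world) a : iCC a -> th w a.
Proof. intro; apply th_closed, Dthm; auto. Qed.

Lemma th_mp (w : world) a b : th w (Imp a b) -> th w a -> th w b.
Proof. intros; apply th_closed; eapply Dmp; apply Dhyp; eauto. Qed.

Lemma th_imp (w : world) a b : iCC (Imp a b) -> th w a -> th w b.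
Proof. intros; eapply th_mp; [apply th_thm|]; eauto. Qed.

Lemma th_and (w : world) a b : th w (And a b) <-> th w a /\ th w b.
Proof.
  split.
  - intro; split; eapply th_imp; eauto; apply d_ipc; constructor.
  - intros [H1 H2]. eapply th_mp; [eapply th_mp; [apply th_thm, d_ipc, ax_AI|]|]; eauto.
Qed.

Lemma th_or (w : world) a b : th w (Or a b) <-> th w a \/ th w b.
Proof.
  split; [apply th_prime|]. intros [H|H]; eapply th_imp; eauto; apply d_ipc; constructor.
Qed.

Definition Sel (a : form) (G D : world) : Prop := forall psi, th G (Cond a psi) -> th D psi.

Lemma cond_mono (G : world) a x y : iCC (Imp x y) -> th G (Cond a x) -> th G (Cond a y).
Proof.
  intros H Hx.
  pose proof (d_congr _ _ _ a (iCC_dup x y H)) as E.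
  assert (H1 : th G (Cond a (And x y))) by (eapply th_imp; [apply iff_1; exact E|exact Hx]).
  assert (H2 : th G (And (Cond a x) (Cond a y))) by (eapply th_imp; [apply iff_1, ax_C|exact H1]).
  apply th_and in H2; tauto.
Qed.

Lemma sel_closed (G : world) a b : Der (fun psi => th G (Cond a psi)) b -> th G (Cond a b).
Proof.
  intro D; induction D as [b Hb|b Hb|x y D1 IH1 D2 IH2].
  - exact Hb.
  - apply (cond_mono G a Top); [apply iCC_top_imp; auto|].
    eapply th_imp; [apply iff_2, ax_N|]. apply th_thm, d_ipc, ax_EFQ.
  - apply (cond_mono G a (And (Imp x y) x)); [apply iCC_mp_and|].
    eapply th_imp; [apply iff_2, ax_C|]. apply th_and; auto.
Qed.

Lemma notin_sel (G : world) a b : ~ th G (Cond a b) -> exists D, Sel a G D /\ ~ th D b.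
Proof.
  intro H. destruct (prime_ext (fun psi => th G (Cond a psi)) b) as [D [H1 H2]].
  - intro D; apply H, sel_closed; auto.
  - exists D; split; auto.
Qed.

Lemma notimp_thm a b : ~ iCC (Imp b a) -> exists D : world, th D b /\ ~ th D a.
Proof.
  intro H. destruct (prime_ext (ext E0 b) a) as [D [H1 H2]].
  - intro D; apply H, thm_of; auto.
  - exists D; split; auto. apply H1; right; auto.
Qed.

Lemma DC (G : world) a b :
  (forall D, Sel a G D -> th D b) -> (forall D : world, th D b -> th D a) ->
  forall psi, th G (Cond a psi) <-> th G (Cond b psi).
Proof.
  intros H1 H2.
  assert (Hab : th G (Cond a b)).
  { apply NNPP; intro Hn. destruct (notin_sel G a b Hn) as [D [HD1 HD2]]. auto. }
  assert (Hba : iCC (Imp b a)).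
  { apply NNPP; intro Hn. destruct (notimp_thm a b Hn) as [D [HD1 HD2]]. auto. }
  pose proof (iCC_and_iff a b Hba) as E.
  intro psi. pose proof (d_congl _ _ _ psi E) as E2. split; intro H.
  - eapply th_imp; [apply iff_1; exact E2|].
    eapply th_imp; [apply ax_cm|]. apply th_and; split; eauto.
  - eapply th_imp; [apply (ax_cut a b psi)|]. apply th_and; split; auto.
    eapply th_imp; [apply iff_2; exact E2|exact H].
Qed.

Definition Pw (A : world -> Prop) (G : world) (a : form) : Prop :=
  (forall D, Sel a G D -> A D) /\ (forall D, A D -> th D a).

Definition Rc (A : world -> Prop) (G D : world) : Prop :=
  (exists a, Pw A G a /\ Sel a G D) \/ ((forall a, ~ Pw A G a) /\ A D).

Lemma Pw_unique A G a1 a2 : Pw A G a1 -> Pw A G a2 ->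
  forall psi, th G (Cond a1 psi) <-> th G (Cond a2 psi).
Proof.
  intros [H11 H12] [H21 H22].
  assert (E1 : forall psi, th G (Cond a1 psi) <-> th G (Cond (And a1 a2) psi)).
  { apply DC.
    - intros D HD. apply th_and; split; [apply H12|apply H22]; apply H11; auto.
    - intros D HD; apply th_and in HD; tauto. }
  assert (E2 : forall psi, th G (Cond a2 psi) <-> th G (Cond (And a1 a2) psi)).
  { apply DC.
    - intros D HD. apply th_and; split; [apply H12|apply H22]; apply H21; auto.
    - intros D HD; apply th_and in HD; tauto. }
  intro psi; rewrite E1, E2; tauto.
Qed.

Lemma Rc_P A G a D : Pw A G a -> (Rc A G D <-> Sel a G D).
Proof.
  intro HP. split.
  - intros [[b [Hb HD]]|[Hn _]].
    + intros psi Hp. apply HD. apply (Pw_unique A G b a Hb HP); auto.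
    + exfalso; eapply Hn; eauto.
  - intro HD; left; exists a; auto.
Qed.

Lemma Rc_in A G D : Rc A G D -> A D.
Proof. intros [[b [[Hb1 _] HD]]|[_ HD]]; auto. Qed.

Lemma Pw_ext (A B : world -> Prop) G a : (forall x, A x <-> B x) -> Pw A G a -> Pw B G a.
Proof. intros E [H1 H2]; split; intros D HD; [apply E; auto|apply H2, E; auto]. Qed.

Lemma Rc_ext (A B : world -> Prop) : (forall x, A x <-> B x) -> forall G D, Rc A G D <-> Rc B G D.
Proof.
  intros E G D.
  assert (E' : forall x, B x <-> A x) by (intro; rewrite E; tauto).
  unfold Rc. split.
  - intros [[a [Ha HD]]|[Hn HD]].
    + left; exists a; split; auto. eapply Pw_ext; eauto.
    + right; split; [|apply E; auto]. intros a Ha; apply (Hn a). eapply Pw_ext; eauto.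
  - intros [[a [Ha HD]]|[Hn HD]].
    + left; exists a; split; auto. eapply Pw_ext; eauto.
    + right; split; [|apply E; auto]. intros a Ha; apply (Hn a). eapply Pw_ext; eauto.
Qed.

Definition wle (G D : world) : Prop := forall x, th G x -> th D x.

Lemma Rc_coh (A : world -> Prop) : forall G G' D', wle G G' -> Rc A G' D' ->
  exists D, Rc A G D /\ wle D D'.
Proof.
  intros G G' D' hle HR. exists D'. split; [|intros x; auto].
  destruct (classic (exists a, Pw A G a)) as [[a Ha]|Hn].
  - assert (Ha' : Pw A G' a).
    { destruct Ha as [H1 H2]; split; auto. intros D HD; apply H1. intros psi Hp; apply HD, hle, Hp. }
    apply (Rc_P A G a D' Ha). apply (Rc_P A G' a D' Ha') in HR.
    intros psi Hp; apply HR, hle, Hp.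
  - right; split; [intros a Ha; apply Hn; eauto|]. eapply Rc_in; eauto.
Qed.

Definition canon (h : inhabited world) : cframe :=
  CFrame world wle Rc h
    (fun x y H => H)
    (fun x y z H1 H2 u Hu => H2 u (H1 u Hu))
    Rc_ext
    (fun A _ => Rc_coh A).

Lemma canon_cautious h : cautious (canon h).
Proof.
  split.
  - intros x A _ y HR. exact (Rc_in A x y HR).
  - intros x A B _ _ H1 H2 y. simpl in *.
    assert (E : forall z, Rc A x z <-> Rc B x z).
    { intro z. destruct (classic (exists a, Pw A x a)) as [[a Ha]|Hn].
      - assert (HaB : Pw B x a).
        { destruct Ha as [Ha1 Ha2]; split.
          - intros D HD. apply H1. apply (Rc_P A x a D (conj Ha1 Ha2)); auto.
          - intros D HD; apply Ha2, H2, HD. }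
        rewrite (Rc_P A x a z Ha), (Rc_P B x a z HaB). tauto.
      - apply Rc_ext. intro u. split; [|apply H2].
        intro Hu. apply H1. right; split; auto. intros a Ha; apply Hn; eauto. }
    unfold upclosure. split; intros [s [Hs1 Hs2]]; exists s; split; auto; apply E; auto.
Qed.

Definition Vc (n : nat) (G : world) : Prop := th G (Var n).

Lemma truth h f : forall G, forces (canon h) Vc G f <-> th G f.
Proof.
  induction f as [n| |a IHa b IHb|a IHa b IHb|a IHa b IHb|a IHa b IHb]; intro G; simpl.
  - unfold Vc; tauto.
  - split; [tauto|apply th_cons].
  - rewrite th_and, IHa, IHb; tauto.
  - rewrite th_or, IHa, IHb; tauto.
  - split.
    + intro H. apply NNPP; intro Hn.
      destruct (prime_ext (ext (th G) a) b) as [D [HD1 HD2]].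
      * intro D. apply Hn, th_closed, ded, D.
      * apply HD2, IHb, H.
        -- intros x Hx; apply HD1; left; auto.
        -- apply IHa, HD1; right; auto.
    + intros H D hle HD. apply IHb. eapply th_mp; [apply hle, H|apply IHa, HD].
  - assert (E : forall D, Rc (fun z => forces (canon h) Vc z a) G D <-> Sel a G D).
    { intro D. rewrite (Rc_ext _ (fun z => th z a) IHa).
      apply Rc_P. split; [|auto]. intros D' HD'. apply HD', th_thm, ax_id. }
    split.
    + intro H. apply NNPP; intro Hn. destruct (notin_sel G a b Hn) as [D [HD1 HD2]].
      apply HD2, IHb, H, E, HD1.
    + intros H D HD. apply IHb. apply E in HD. apply HD, H.
Qed.

Theorem theorem6p7 :
  forall f : form, iCC f <-> (forall F : cframe, cautious F -> valid F f).
Proof.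
  intro f. split; [apply soundness|].
  intro H. apply NNPP; intro Hn.
  destruct (prime_ext E0 f) as [w0 [_ Hw0]].
  - intro D. apply Hn, Der_empty, D.
  - apply Hw0. apply (truth (inhabits w0)).
    apply (H (canon (inhabits w0)) (canon_cautious _) Vc).
    intros n x y hxy Hx. apply hxy, Hx.
Qed.
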